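(* Let $U_1$ be a vector space over a field of characteristic zero, let $U_{0-}=\bigoplus_{p\geq1}U_{-p+1}$ with the bilinear operation $\circ$ defined below, and set $[\![A,B]\!]=A\circ B-B\circ A$ for $A,B\in U_{0-}$. Then $(U_{0-},[\![\cdot,\cdot]\!])$ is a Lie algebra.
   Context: Define vector spaces recursively by $U_{-p+1}=\mathrm{Hom}(U_1,U_{-p+2})$ for $p=1,2,\ldots$ (all linear maps). Elements of $U_{-p+1}$ are called operators of order $p$ (elements of $U_1$ have order $0$). For an operator $A$ of order $p\geq1$ and $x\in U_1$ set $A\circ x=A(x)$ and $x\circ A=0$. For operators $A,B$ of orders $p,q\geq1$, define $A\circ B\in U_{-(p+q-1)+1}$ recursively by $(A\circ B)(x)=A\circ B(x)+A(x)\circ B$ for all $x\in U_1$, and extend $\circ$ bilinearly to $U_{0-}$. *)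

(* Defs.v *)
From HB Require Import structures.
From mathcomp Require Import all_boot all_order all_algebra.
Set Implicit Arguments. Unset Strict Implicit. Unset Printing Implicit Defensive.
Import Order.TTheory GRing.Theory Num.Theory.
Local Open Scope ring_scope.

Definition is_lie_algebra (K : fieldType) (V : Type) (S : V -> Prop)
  (zero : V) (add : V -> V -> V) (scale : K -> V -> V) (br : V -> V -> V) : Prop :=
  S zero /\
      (forall A B, S A -> S B -> S (add A B)) /\
      (forall a A, S A -> S (scale a A)) /\
      (forall A B, S A -> S B -> S (br A B)) /\
      (forall a A B C, S A -> S B -> S C ->
          br (add (scale a A) B) C = add (scale a (br A C)) (br B C)) /\
      (forall a A B C, S A -> S B -> S C ->
          br A (add (scale a B) C) = add (scale a (br A B)) (br A C)) /\
      (forall A, S A -> br A A = zero) /\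
      (forall A B C, S A -> S B -> S C ->
          add (br A (br B C)) (add (br B (br C A)) (br C (br A B))) = zero).

Section Operators.
Variables (K : fieldType) (U : lmodType K).

Fixpoint Fn (p : nat) : Type := if p is p'.+1 then U -> Fn p' else U.

Fixpoint fzero (p : nat) : Fn p :=
  match p with 0 => (0 : U) | p'.+1 => fun _ => fzero p' end.

Fixpoint fadd (p : nat) : Fn p -> Fn p -> Fn p :=
  match p with
  | 0 => fun f g => (f : U) + g
  | p'.+1 => fun f g x => fadd (f x) (g x)
  end.

Fixpoint fscale (p : nat) (a : K) : Fn p -> Fn p :=
  match p with
  | 0 => fun f => a *: (f : U)
  | p'.+1 => fun f x => fscale a (f x)
  end.

(* islin p f : f belongs to U_{-p+1}, i.e. U_{-p+1} = Hom(U_1, U_{-p+2})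
   (all linear maps), recursively; U_1 = Fn 0 = U. *)
Fixpoint islin (p : nat) : Fn p -> Prop :=
  match p with
  | 0 => fun _ => True
  | p'.+1 => fun f =>
      (forall x, islin (f x)) /\
      (forall (a : K) (x y : U), f (a *: x + y) = fadd (fscale a (f x)) (f y))
  end.

Definition castF (m n : nat) (e : m = n) (f : Fn m) : Fn n := ecast k (Fn k) e f.

(* A of order p+1, B of order q+1; A \o B has order (p+1)+(q+1)-1 = p+q+1.
   (A \o B)(x) = A \o B(x) + A(x) \o B, with A \o y = A(y) for y in U_1
   and y \o B = 0 for y in U_1. *)
Fixpoint circ (p : nat) : forall q, Fn p.+1 -> Fn q.+1 -> Fn (p + q).+1 :=
  fix circ_p (q : nat) : Fn p.+1 -> Fn q.+1 -> Fn (p + q).+1 :=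
    let second (q0 : nat) : Fn p.+1 -> Fn q0.+1 -> U -> Fn (p + q0) :=
      match p as p0 return Fn p0.+1 -> Fn q0.+1 -> U -> Fn (p0 + q0) with
      | 0 => fun _ _ _ => fzero q0
      | p'.+1 => fun A B x => circ (A x) B
      end in
    match q as q0 return Fn p.+1 -> Fn q0.+1 -> Fn (p + q0).+1 with
    | 0 => fun A B x =>
        fadd (castF (esym (addn0 p)) (A (B x))) (second 0 A B x)
    | q'.+1 => fun A B x =>
        fadd (castF (esym (addnS p q')) (circ_p q' A (B x))) (second q'.+1 A B x)
    end.

(* Elements of U_{0-} = (+)_{p>=1} U_{-p+1}: families A with A p the
   component of order p+1, all linear, finitely many nonzero. *)
Definition Fam := forall p : nat, Fn p.+1.

Definition inU0m (A : Fam) : Prop :=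
  (forall p, islin (A p)) /\ exists N, forall p, (N <= p)%N -> A p = fzero p.+1.

Definition famzero : Fam := fun p => fzero p.+1.
Definition famadd (A B : Fam) : Fam := fun p => fadd (A p) (B p).
Definition famscale (a : K) (A : Fam) : Fam := fun p => fscale a (A p).

(* Bilinear extension of \o to U_{0-}: the order-(r+1) component of A \o B
   is the sum over p + q = r of A_(p+1) \o B_(q+1). *)
Definition famcirc (A B : Fam) : Fam := fun r =>
  \big[@fadd r.+1 / fzero r.+1]_(i < r.+1)
     castF (f_equal S (subnKC (ltn_ord i : (i <= r)%N)))
           (circ (A i) (B (r - i)%N)).

Definition fambracket (A B : Fam) : Fam :=
  famadd (famcirc A B) (famscale (-1) (famcirc B A)).

End Operators.

(* Main.v *)
Require Import Defs.
From HB Require Import structures.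
From mathcomp Require Import all_boot all_order all_algebra.
From Stdlib Require Import FunctionalExtensionality.
From mathcomp Require Import zify.
Set Implicit Arguments. Unset Strict Implicit. Unset Printing Implicit Defensive.
Import GRing.Theory.
Local Open Scope ring_scope.

Section Sem.
Variables (K : fieldType) (U : lmodType K).
Definition Sm := (nat -> U) -> U.
Definition scons (x : U) (s : nat -> U) : nat -> U := fun n => if n is n'.+1 then s n' else x.
Definition stail (s : nat -> U) : nat -> U := fun n => s n.+1.
Definition appS (x : U) (F : Sm) : Sm := fun s => F (scons x s).
Definition z0 : nat -> U := fun _ => 0.

Fixpoint tosem (n : nat) : Fn U n -> Sm :=
  match n with 0 => fun f _ => f | n'.+1 => fun f s => tosem (f (s 0%N)) (stail s) end.

Fixpoint P (a : nat) : nat -> Sm -> Sm -> Sm :=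
  fix Pa (b : nat) : Sm -> Sm -> Sm :=
  match a with
  | 0 => fun _ _ _ => 0
  | a'.+1 => match b with
     | 0 => fun A B s => A (scons (B z0) s)
     | b'.+1 => fun A B s => Pa b' A (appS (s 0%N) B) (stail s) + P a' b (appS (s 0%N) A) B (stail s)
     end
  end.

Lemma tosem_fadd n (f g : Fn U n) s : tosem (fadd f g) s = tosem f s + tosem g s.
Proof. by elim: n f g s => [|n IH] f g s //=. Qed.
Lemma tosem_fscale n a (f : Fn U n) s : tosem (fscale a f) s = a *: tosem f s.
Proof. by elim: n f s => [|n IH] f s //=. Qed.
Lemma tosem_fzero n s : tosem (fzero U n) s = 0.
Proof. by elim: n s => [|n IH] s //=. Qed.
Lemma tosem_castF m n (e : m = n) (f : Fn U m) s : tosem (castF e f) s = tosem f s.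
Proof. by case: n / e. Qed.
Lemma tosem_inj n (f g : Fn U n) : (forall s, tosem f s = tosem g s) -> f = g.
Proof.
elim: n f g => [|n IH] f g H /=; first exact: (H z0).
apply: functional_extensionality => x; apply: IH => s.
exact: (H (scons x s)).
Qed.

Lemma tosemS n (f : Fn U n.+1) s : tosem f s = tosem (f (s 0%N)) (stail s).
Proof. by []. Qed.

Lemma tosem_circ p q (A : Fn U p.+1) (B : Fn U q.+1) s :
  tosem (circ A B) s = P p.+1 q.+1 (tosem A) (tosem B) s.
Proof.
elim: p q A B s => [|p IHp] q.
  elim: q => [|q IHq] A B s; rewrite tosemS; cbn [circ]; rewrite tosem_fadd tosem_castF tosem_fzero.
    by [].
  by rewrite IHq.
elim: q => [|q IHq] A B s; rewrite tosemS; cbn [circ]; rewrite tosem_fadd tosem_castF.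
  by rewrite IHp.
by rewrite IHp IHq.
Qed.

Fixpoint mlin (n : nat) (F : Sm) : Prop :=
  match n with
  | 0 => True
  | n'.+1 => (forall (a : K) x y s, F (scons (a *: x + y) s) = a *: F (scons x s) + F (scons y s))
             /\ forall x, mlin n' (appS x F)
  end.

Lemma scons_eta s : scons (s 0%N) (stail s) = s.
Proof. by apply: functional_extensionality => -[]. Qed.

Lemma mlin0 n F s : mlin n.+1 F -> F (scons 0 s) = 0.
Proof.
move=> [H _]; have E := H 1 0 0 s; rewrite !scale1r addr0 in E.
by apply: (addrI (F (scons 0 s))); rewrite addr0 -E.
Qed.

Lemma PSS a b A B s : P a.+1 b.+1 A B s =
  P a.+1 b A (appS (s 0%N) B) (stail s) + P a b.+1 (appS (s 0%N) A) B (stail s).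
Proof. by []. Qed.
Lemma PS0 a A B s : P a.+1 0 A B s = A (scons (B z0) s).
Proof. by []. Qed.

Lemma P0 b A B : P 0 b A B = fun _ => 0.
Proof. by case: b. Qed.

Lemma P_linl a b F G B (al : K) s :
  P a b (fun t => al *: F t + G t) B s = al *: P a b F B s + P a b G B s.
Proof.
elim: a b F G B s => [|a IHa] b F G B s; first by rewrite !P0 scaler0 addr0.
elim: b F G B s => [|b IHb] F G B s; first by rewrite !PS0.
by rewrite !PSS IHb IHa scalerDr addrACA.
Qed.

Lemma P_addl a b F G B s :
  P a b (fun t => F t + G t) B s = P a b F B s + P a b G B s.
Proof.
have -> : (fun t => F t + G t) = (fun t => 1 *: F t + G t).
  by apply: functional_extensionality => t; rewrite scale1r.
by rewrite P_linl scale1r.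
Qed.

Lemma P_zerol a b B s : P a b (fun _ => 0) B s = 0.
Proof.
elim: a b B s => [|a IHa] b B s; first by rewrite P0.
elim: b B s => [|b IHb] B s; first by rewrite PS0.
by rewrite PSS IHb IHa addr0.
Qed.

Lemma mlin_appS n F x : mlin n.+1 F -> mlin n (appS x F).
Proof. by case=> _; apply. Qed.

End Sem.

Section Sem2.
Variables (K : fieldType) (U : lmodType K).
Local Notation Sm := (Sm U).
Local Notation P := (@P K U).
Local Notation mlin := (@mlin K U).
Local Notation z0 := (@z0 K U).
Local Notation appS := (@appS K U).
Local Notation stail := (@stail K U).
Local Notation scons := (@scons K U).
Lemma P_linr a b A F G (al : K) s : mlin a A ->
  P a b A (fun t => al *: F t + G t) s = al *: P a b A F s + P a b A G s.
Proof.
elim: a b A F G s => [|a IHa] b A F G s HA; first by rewrite !P0 scaler0 addr0.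
elim: b A F G s HA => [|b IHb] A F G s HA; idtac.
- by rewrite !PS0; case: HA => H1 _; rewrite H1.
- rewrite !PSS IHb // IHa; last exact: mlin_appS.
  by rewrite scalerDr addrACA.
Qed.

Lemma P_addr a b A F G s : mlin a A ->
  P a b A (fun t => F t + G t) s = P a b A F s + P a b A G s.
Proof.
move=> HA.
have -> : (fun t => F t + G t) = (fun t => 1 *: F t + G t).
  by apply: functional_extensionality => t; rewrite scale1r.
by rewrite P_linr // scale1r.
Qed.

Lemma P_zeror a b A s : mlin a A -> P a b A (fun _ => 0) s = 0.
Proof.
elim: a b A s => [|a IHa] b A s HA; first by rewrite P0.
elim: b A s HA => [|b IHb] A s HA; first by rewrite PS0 (mlin0 _ HA).
rewrite PSS IHb // IHa ?addr0 //; exact: mlin_appS.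
Qed.

Lemma mlin_lin n F G (al : K) : mlin n F -> mlin n G -> mlin n (fun t => al *: F t + G t).
Proof.
elim: n F G => [|n IH] F G //= [HF1 HF2] [HG1 HG2]; split.
  move=> b x y s; rewrite HF1 HG1 !scalerDr !scalerA [b * al]mulrC.
  by rewrite addrACA.
by move=> x; exact: (IH (appS x F) (appS x G) (HF2 x) (HG2 x)).
Qed.

Lemma mlin_add n F G : mlin n F -> mlin n G -> mlin n (fun t => F t + G t).
Proof.
move=> HF HG.
have -> : (fun t => F t + G t) = (fun t => 1 *: F t + G t).
  by apply: functional_extensionality => t; rewrite scale1r.
exact: mlin_lin.
Qed.

Lemma mlin_zero n : mlin n (fun _ => 0).
Proof.
elim: n => [|n IH] //=; split => // b x y s; by rewrite scaler0 addr0.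
Qed.

Lemma stail_scons x s : stail (scons x s) = s.
Proof. by []. Qed.
Lemma scons0 x s : scons x s 0%N = x.
Proof. by []. Qed.

Lemma appS_lin n F (al : K) x y : mlin n.+1 F ->
  appS (al *: x + y) F = (fun t => al *: appS x F t + appS y F t).
Proof. by case=> H _; apply: functional_extensionality => t; rewrite /appS H. Qed.

Lemma mlin_P a b A B : mlin a.+1 A -> mlin b B -> mlin (a + b) (P a.+1 b A B).
Proof.
elim: a b A B => [|a IHa] b.
  elim: b => [|b IHb] A B HA HB.
    have -> : P 1 0 A B = appS (B z0) A by [].
    exact: mlin_appS.
  rewrite add0n; split.
    move=> al x y s; rewrite !PSS !P0 !addr0 (appS_lin _ _ _ HB).
    by rewrite P_linr.
  move=> x.
  have -> : appS x (P 1 b.+1 A B) = P 1 b A (appS x B).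
    by apply: functional_extensionality => t; rewrite /appS PSS P0 addr0.
  exact: IHb (mlin_appS _ HB).
elim: b => [|b IHb] A B HA HB.
  have -> : P a.+2 0 A B = appS (B z0) A by [].
  rewrite addn0; exact: mlin_appS.
rewrite addnS; split.
  move=> al x y s; rewrite !(PSS a.+1 b) (appS_lin _ _ _ HB) (appS_lin _ _ _ HA).
  rewrite !stail_scons !scons0 (P_linr _ _ _ _ _ HA) (P_linl a.+1 b.+1).
  by rewrite addrACA -scalerDr.
move=> x.
have -> : appS x (P a.+2 b.+1 A B) =
   (fun t => P a.+2 b A (appS x B) t + P a.+1 b.+1 (appS x A) B t) by [].
apply: mlin_add; first exact: IHb (mlin_appS _ HB).
rewrite addSnnS; apply: IHa; [exact: mlin_appS | exact: HB].
Qed.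
End Sem2.

Section Sem2.
Variables (K : fieldType) (U : lmodType K).
Local Notation Sm := (Sm U).
Local Notation P := (@P K U).
Local Notation mlin := (@mlin K U).
Local Notation z0 := (@z0 K U).
Local Notation appS := (@appS K U).
Local Notation stail := (@stail K U).
Local Notation scons := (@scons K U).
Lemma zmod6 (V : zmodType) (l1 l2 l3 r1 r2 r3 : V) :
  l1 + (l2 + l3) - (r1 + r2 + r3) = (l1 - r1) + (l2 - r2) + (l3 - r3).
Proof. by rewrite (addrACA l1) (addrACA (l1 + l2)) !opprD !addrA. Qed.

Definition assoc m1 m2 a b c (A B C : Sm) s :=
  P m1 c (P a.+1 b A B) C s - P a.+1 m2 A (P b c B C) s.

Lemma PS0f a A B : P a.+1 0 A B = appS (B z0) A.
Proof. by []. Qed.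

Lemma preLie_b0 a c A B C s : mlin a.+1 A -> (0 < c)%N ->
  assoc (a+0) (0+c).-1 a 0 c A B C s = assoc (a+c) (c+0).-1 a c 0 A C B s.
Proof.
case: c => [//|c] HA _; rewrite /assoc addn0 add0n addnS PS0f P0 (P_zeror _ _ HA).
rewrite PS0 PSS PS0f stail_scons scons0 addn0.
by rewrite subr0 addrAC subrr add0r.
Qed.

Lemma expand a b c A B C x t : mlin a.+1 A ->
  assoc (a + b.+1) (b.+1 + c.+1).-1 a b.+1 c.+1 A B C (scons x t) =
  assoc (a + b.+1) (b + c) a b.+1 c A B (appS x C) t
  + assoc (a + b) (b + c) a b c.+1 A (appS x B) C t
  + (P (a + b) c.+1 (P a b.+1 (appS x A) B) C t
     - P a (b + c).+1 (appS x A) (P b.+1 c.+1 B C) t).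
Proof.
move=> HA; rewrite /assoc.
have -> : (b.+1 + c.+1).-1 = (b + c).+1 by rewrite addSn addnS.
rewrite addnS (PSS (a + b)) (PSS a (b + c)) stail_scons scons0.
have -> : appS x (P a.+1 b.+1 A B) =
   (fun u => P a.+1 b A (appS x B) u + P a b.+1 (appS x A) B u).
  by apply: functional_extensionality => u; rewrite /appS PSS stail_scons scons0.
have -> : appS x (P b.+1 c.+1 B C) =
   (fun u => P b.+1 c B (appS x C) u + P b c.+1 (appS x B) C u).
  by apply: functional_extensionality => u; rewrite /appS PSS stail_scons scons0.
by rewrite P_addl (P_addr _ _ _ _ HA) zmod6.
Qed.


Lemma preLie n : forall a b c A B C s, (a + b + c <= n)%N -> (0 < b + c)%N ->
  mlin a.+1 A -> mlin b B -> mlin c C ->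
  forall m1 m2 m3 m4, m1 = (a + b)%N -> m2 = (b + c).-1 -> m3 = (a + c)%N -> m4 = (c + b).-1 ->
  assoc m1 m2 a b c A B C s = assoc m3 m4 a c b A C B s.
Proof.
elim: n => [|n IH] a b c A B C s Hn Hbc HA HB HC m1 m2 m3 m4 -> -> -> ->.
  exfalso; lia.
case: b Hn Hbc HB => [|b] Hn Hbc HB.
  exact: preLie_b0.
case: c Hn Hbc HC => [|c] Hn Hbc HC.
  by symmetry; apply: preLie_b0.
rewrite -(scons_eta s) (@expand a b c A B C _ _ HA) (@expand a c b A C B _ _ HA).
set x := s 0%N; set t := stail s.
rewrite (IH a b.+1 c A B (appS x C) t _ _ HA HB (mlin_appS _ HC) _ _ (a + c) (c + b)); try lia.
rewrite (IH a b c.+1 A (appS x B) C t _ _ HA (mlin_appS _ HB) HC _ _ (a + c.+1) (c + b)); try lia.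
have -> : P (a + b) c.+1 (P a b.+1 (appS x A) B) C t - P a (b + c).+1 (appS x A) (P b.+1 c.+1 B C) t
   = P (a + c) b.+1 (P a c.+1 (appS x A) C) B t - P a (c + b).+1 (appS x A) (P c.+1 b.+1 C B) t.
  case: a Hn HA => [|a] Hn HA.
    by rewrite !P0 !P_zerol.
  apply: (IH a b.+1 c.+1 (appS x A) B C t _ _ (mlin_appS _ HA) HB HC); lia.
by rewrite [X in X + _ = _]addrC.
Qed.

End Sem2.

Section Sem2.
Variables (K : fieldType) (U : lmodType K).
Local Notation Sm := (Sm U).
Local Notation P := (@P K U).
Local Notation mlin := (@mlin K U).
Local Notation z0 := (@z0 K U).
Local Notation appS := (@appS K U).
Local Notation stail := (@stail K U).
Local Notation scons := (@scons K U).
Local Notation tosem := (@tosem K U).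
Definition svF (X : Fam U) (n : nat) : Sm := tosem (X n).

Lemma sv_circ (A B : Fam U) r s :
  tosem (famcirc A B r) s = \sum_(i < r.+1) P i.+1 (r - i).+1 (svF A i) (svF B (r - i)) s.
Proof.
rewrite /famcirc (big_morph (fun X : Fn U r.+1 => tosem X s) (id1 := 0) (op1 := +%R)).
- by apply: eq_bigr => i _; rewrite tosem_castF tosem_circ.
- by move=> x y; rewrite tosem_fadd.
- by rewrite tosem_fzero.
Qed.

Lemma Fam_ext (X Y : Fam U) : (forall r s, tosem (X r) s = tosem (Y r) s) -> X = Y.
Proof.
move=> H; apply: functional_extensionality_dep => r; apply: tosem_inj => s; exact: H.
Qed.

Lemma tosem_scons n (f : Fn U n.+1) z s : tosem f (scons z s) = tosem (f z) s.
Proof. by []. Qed.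

Lemma islin_mlin n (f : Fn U n) : islin f <-> mlin n (tosem f).
Proof.
elim: n f => [|n IH] f; first by [].
split.
  case=> H1 H2; split.
    by move=> a x y s; rewrite !tosem_scons H2 tosem_fadd tosem_fscale.
  move=> x; have -> : appS x (tosem f) = tosem (f x) by [].
  by apply/IH; apply: H1.
case=> H1 H2; split.
  move=> x; apply/IH; exact: (H2 x).
move=> a x y; apply: tosem_inj => s.
rewrite tosem_fadd tosem_fscale -!tosem_scons.
exact: (H1 a x y s).
Qed.

Lemma svF_add (X Y : Fam U) n : svF (famadd X Y) n = fun t => svF X n t + svF Y n t.
Proof. by apply: functional_extensionality => t; rewrite /svF /famadd tosem_fadd. Qed.
Lemma svF_scale a (X : Fam U) n : svF (famscale a X) n = fun t => a *: svF X n t.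
Proof. by apply: functional_extensionality => t; rewrite /svF /famscale tosem_fscale. Qed.

Lemma P_suml a b m (F : nat -> Sm) C s :
  P a b (fun t => \sum_(j < m) F j t) C s = \sum_(j < m) P a b (F j) C s.
Proof.
elim: m => [|m IH].
  have -> : (fun t => \sum_(j < 0) F j t) = (fun _ => 0).
    by apply: functional_extensionality => t; rewrite big_ord0.
  by rewrite P_zerol big_ord0.
have -> : (fun t => \sum_(j < m.+1) F j t) = (fun t => \sum_(j < m) F j t + F m t).
  by apply: functional_extensionality => t; rewrite big_ord_recr.
by rewrite P_addl IH big_ord_recr.
Qed.

Lemma P_sumr a b m A (F : nat -> Sm) s : mlin a A ->
  P a b A (fun t => \sum_(j < m) F j t) s = \sum_(j < m) P a b A (F j) s.
Proof.
move=> HA; elim: m => [|m IH].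
  have -> : (fun t => \sum_(j < 0) F j t) = (fun _ => 0).
    by apply: functional_extensionality => t; rewrite big_ord0.
  by rewrite P_zeror // big_ord0.
have -> : (fun t => \sum_(j < m.+1) F j t) = (fun t => \sum_(j < m) F j t + F m t).
  by apply: functional_extensionality => t; rewrite big_ord_recr.
by rewrite P_addr // IH big_ord_recr.
Qed.

Lemma mlin_sum n m (F : nat -> Sm) : (forall j, (j < m)%N -> mlin n (F j)) ->
  mlin n (fun t => \sum_(j < m) F j t).
Proof.
elim: m => [|m IH] H.
  have -> : (fun t => \sum_(j < 0) F j t) = (fun _ => 0).
    by apply: functional_extensionality => t; rewrite big_ord0.
  exact: mlin_zero.
have -> : (fun t => \sum_(j < m.+1) F j t) = (fun t => \sum_(j < m) F j t + F m t).
  by apply: functional_extensionality => t; rewrite big_ord_recr.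
apply: mlin_add; last exact: H.
by apply: IH => j Hj; apply: H; lia.
Qed.

Lemma tri (V : zmodType) r (G : nat -> nat -> V) :
  \sum_(i < r.+1) \sum_(j < i.+1) G i j = \sum_(j < r.+1) \sum_(k < (r - j).+1) G (j + k)%N j.
Proof.
elim: r => [|r IH]; first by rewrite !big_ord1 /= addn0.
rewrite big_ord_recr /= IH.
under [RHS]eq_bigr => j _ do rewrite big_ord_recr /=.
rewrite big_split /= [X in _ = _ + X]big_ord_recr [X in _ = X + _]big_ord_recr /= subnn big_ord0 addr0.
congr (_ + _).
  apply: eq_bigr => j _ /=; have Hj := ltn_ord j.
  by rewrite subSn.
rewrite big_ord_recr /= addn0; congr (_ + _).
apply: eq_bigr => j _ /=; have Hj := ltn_ord j.
by rewrite subnKC // ltnW.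
Qed.

End Sem2.

Section Sem2.
Variables (K : fieldType) (U : lmodType K).
Local Notation Sm := (Sm U).
Local Notation P := (@P K U).
Local Notation mlin := (@mlin K U).
Local Notation z0 := (@z0 K U).
Local Notation appS := (@appS K U).
Local Notation stail := (@stail K U).
Local Notation scons := (@scons K U).
Local Notation tosem := (@tosem K U).
Local Notation svF := (@svF K U).
Lemma svF_circ (X Y : Fam U) i :
  svF (famcirc X Y) i = fun t => \sum_(j < i.+1) P j.+1 (i - j).+1 (svF X j) (svF Y (i - j)) t.
Proof. by apply: functional_extensionality => t; rewrite /svF sv_circ. Qed.

Lemma assoc_sum_x : True. Proof. by []. Qed.
Lemma assoc_sum (X Y Z : Fam U) r s : (forall n, mlin n.+1 (svF X n)) ->
  tosem (famcirc (famcirc X Y) Z r) s - tosem (famcirc X (famcirc Y Z) r) s =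
  \sum_(j < r.+1) \sum_(k < (r - j).+1)
     assoc (j + k).+1 (r - j).+1 j k.+1 (r - j - k).+1 (svF X j) (svF Y k) (svF Z (r - j - k)) s.
Proof.
move=> HX; rewrite !sv_circ.
under eq_bigr => i _ do rewrite svF_circ (@P_suml K U _ _ _ (fun j => P j.+1 (i - j).+1 (svF X j) (svF Y (i - j)))).
under [X in _ - X = _]eq_bigr => i _ do rewrite svF_circ (@P_sumr K U _ _ _ _ (fun k => P k.+1 (r - i - k).+1 (svF Y k) (svF Z (r - i - k))) _ (HX i)).
rewrite (tri r (fun i j => P i.+1 (r - i).+1 (P j.+1 (i - j).+1 (svF X j) (svF Y (i - j))) (svF Z (r - i)) s)).
rewrite -sumrB; apply: eq_bigr => j _.
rewrite -sumrB; apply: eq_bigr => k _.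
by rewrite /assoc addKn subnDA.
Qed.

Lemma fam_preLie (X Y Z : Fam U) r s :
  (forall n, mlin n.+1 (svF X n)) -> (forall n, mlin n.+1 (svF Y n)) -> (forall n, mlin n.+1 (svF Z n)) ->
  tosem (famcirc (famcirc X Y) Z r) s - tosem (famcirc X (famcirc Y Z) r) s =
  tosem (famcirc (famcirc X Z) Y r) s - tosem (famcirc X (famcirc Z Y) r) s.
Proof.
move=> HX HY HZ; rewrite !assoc_sum //.
apply: eq_bigr => j _.
rewrite [RHS](reindex_inj rev_ord_inj) /=; apply: eq_bigr => k _.
have Hk := ltn_ord k.
have Hj := ltn_ord j.
rewrite subSS subKn; last by lia.
apply: (@preLie K U (j + k.+1 + (r - j - k).+1) j k.+1 (r - j - k).+1 (svF X j) (svF Y k) (svF Z (r - j - k)) s _ _ (HX j) (HY k) (HZ _)); lia.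
Qed.
End Sem2.

Section Sem2.
Variables (K : fieldType) (U : lmodType K).
Local Notation Sm := (Sm U).
Local Notation P := (@P K U).
Local Notation mlin := (@mlin K U).
Local Notation z0 := (@z0 K U).
Local Notation appS := (@appS K U).
Local Notation stail := (@stail K U).
Local Notation scons := (@scons K U).
Local Notation tosem := (@tosem K U).
Local Notation svF := (@svF K U).

Lemma jac6 (V : zmodType) (x1 x2 x3 x4 x5 x6 : V) :
  (x1 - x2) - (x3 - x6) + (((x3 - x4) - (x5 - x2)) + ((x5 - x6) - (x1 - x4))) = 0.
Proof.
rewrite !opprB !addrA.
rewrite (@GRing.add V).[ACl ((1*12)*(2*7)*(3*10)*(4*5)*(6*11)*(8*9))].
by rewrite !subrr !addNr !addr0.
Qed.

Lemma swap4 (V : zmodType) (x y z w : V) : x - y = z - w -> y - w = x - z.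
Proof.
move/eqP; rewrite subr_eq => /eqP ->.
rewrite (@GRing.add V).[ACl ((1*4)*3*2)].
by rewrite subrr add0r.
Qed.

Definition goodF (X : Fam U) := forall n, mlin n.+1 (svF X n).

Lemma inU_good X : inU0m X -> goodF X.
Proof. by case=> H _ n; apply/islin_mlin; apply: H. Qed.

Lemma tosem_fzero_fun n : tosem (fzero U n) = fun _ => 0.
Proof. by apply: functional_extensionality => s; rewrite tosem_fzero. Qed.

Lemma mlin_scale n (a : K) F : mlin n F -> mlin n (fun t => a *: F t).
Proof.
move=> HF; have -> : (fun t => a *: F t) = (fun t => a *: F t + (fun _ => 0) t).
  by apply: functional_extensionality => t; rewrite addr0.
apply: mlin_lin => //; exact: mlin_zero.
Qed.

Lemma mlin_fc A B r : goodF A -> goodF B -> mlin r.+1 (svF (famcirc A B) r).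
Proof.
move=> HA HB; rewrite svF_circ.
apply: (@mlin_sum K U r.+1 r.+1 (fun j => P j.+1 (r - j).+1 (svF A j) (svF B (r - j)))) => i Hi.
have := mlin_P (HA i) (HB (r - i)%N).
by rewrite (_ : (i + (r - i).+1)%N = r.+1) //; lia.
Qed.

Lemma fc_linl (X1 X2 Y Z : Fam U) (a : K) r s :
  (forall i, svF Z i = fun t => a *: svF X1 i t + svF X2 i t) ->
  tosem (famcirc Z Y r) s = a *: tosem (famcirc X1 Y r) s + tosem (famcirc X2 Y r) s.
Proof.
move=> H; rewrite !sv_circ scaler_sumr -big_split; apply: eq_bigr => i _.
by rewrite H P_linl.
Qed.

Lemma fc_linr (X1 X2 Y Z : Fam U) (a : K) r s : goodF Y ->
  (forall i, svF Z i = fun t => a *: svF X1 i t + svF X2 i t) ->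
  tosem (famcirc Y Z r) s = a *: tosem (famcirc Y X1 r) s + tosem (famcirc Y X2 r) s.
Proof.
move=> HY H; rewrite !sv_circ scaler_sumr -big_split; apply: eq_bigr => i _.
by rewrite H P_linr.
Qed.

Lemma v_br X Y r s : tosem (fambracket X Y r) s = tosem (famcirc X Y r) s - tosem (famcirc Y X r) s.
Proof. by rewrite /fambracket /famadd /famscale tosem_fadd tosem_fscale scaleN1r. Qed.

Lemma svF_br X Y i : svF (fambracket X Y) i = fun t => (-1) *: svF (famcirc Y X) i t + svF (famcirc X Y) i t.
Proof.
apply: functional_extensionality => t.
by rewrite /svF /fambracket /famadd /famscale tosem_fadd tosem_fscale addrC.
Qed.

Lemma v_fc_brr X Y Z r s : goodF X ->
  tosem (famcirc X (fambracket Y Z) r) s =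
  tosem (famcirc X (famcirc Y Z) r) s - tosem (famcirc X (famcirc Z Y) r) s.
Proof.
move=> HX; rewrite (@fc_linr (famcirc Z Y) (famcirc Y Z) X _ (-1) r s HX (svF_br Y Z)).
by rewrite scaleN1r addrC.
Qed.

Lemma v_fc_brl X Y Z r s :
  tosem (famcirc (fambracket Y Z) X r) s =
  tosem (famcirc (famcirc Y Z) X r) s - tosem (famcirc (famcirc Z Y) X r) s.
Proof.
rewrite (@fc_linl (famcirc Z Y) (famcirc Y Z) X _ (-1) r s (svF_br Y Z)).
by rewrite scaleN1r addrC.
Qed.

End Sem2.

Theorem corollary2p2 (K : fieldType) (U : lmodType K)
  (charK0 : [pchar K]%R =i pred0) :
  is_lie_algebra (@inU0m K U) (@famzero K U) (@famadd K U) (@famscale K U)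
    (@fambracket K U).
Proof.
have fam0 : forall (X : Fam U) N p, (forall p, (N <= p)%N -> X p = fzero U p.+1) ->
    (N <= p)%N -> svF X p = fun _ => 0.
  by move=> X N p H Hp; rewrite /svF (H p Hp) tosem_fzero_fun.
split; [|split; [|split; [|split; [|split; [|split; [|split]]]]]].
- split; last by exists 0%N.
  by move=> p; apply/islin_mlin; rewrite tosem_fzero_fun; exact: mlin_zero.
- move=> A B HA HB; split.
    move=> p; apply/islin_mlin.
    change (mlin p.+1 (svF (famadd A B) p)); rewrite svF_add.
    by apply: mlin_add; [exact: inU_good HA p | exact: inU_good HB p].
  case: HA => _ [NA HNA]; case: HB => _ [NB HNB]; exists (maxn NA NB) => p Hp.
  have E1 : A p = fzero U p.+1 by apply: HNA; lia.
  have E2 : B p = fzero U p.+1 by apply: HNB; lia.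
  by apply: tosem_inj => s; rewrite /famadd E1 E2 tosem_fadd !tosem_fzero addr0.
- move=> a A HA; split.
    move=> p; apply/islin_mlin.
    change (mlin p.+1 (svF (famscale a A) p)); rewrite svF_scale.
    by apply: mlin_scale; exact: inU_good HA p.
  case: HA => _ [NA HNA]; exists NA => p Hp.
  by apply: tosem_inj => s; rewrite /famscale HNA // tosem_fscale !tosem_fzero scaler0.
- move=> A B HA HB; split.
    move=> p; apply/islin_mlin.
    change (mlin p.+1 (svF (fambracket A B) p)); rewrite svF_br.
    by apply: mlin_lin; apply: mlin_fc; apply: inU_good.
  have gA := inU_good HA; have gB := inU_good HB.
  case: HA => _ [NA HNA]; case: HB => _ [NB HNB]; exists (NA + NB)%N => r Hr.
  apply: tosem_inj => s; rewrite v_br !sv_circ tosem_fzero.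
  rewrite !big1 ?subrr // => i _.
    case: (leqP NB i) => h; first by rewrite (fam0 B NB i HNB h) P_zerol.
    by rewrite (fam0 A NA (r - i)%N HNA) ?P_zeror //; lia.
  case: (leqP NA i) => h; first by rewrite (fam0 A NA i HNA h) P_zerol.
  by rewrite (fam0 B NB (r - i)%N HNB) ?P_zeror //; lia.
- move=> a A B C HA HB HC; apply: Fam_ext => r s.
  have H : forall i, svF (famadd (famscale a A) B) i = fun t => a *: svF A i t + svF B i t.
    move=> i; apply: functional_extensionality => t.
    by rewrite /svF /famadd /famscale tosem_fadd tosem_fscale.
  rewrite v_br (fc_linl _ _ _ H) (@fc_linr K U A B C _ a r s (inU_good HC) H).
  rewrite /famadd /famscale tosem_fadd tosem_fscale !v_br.
  by rewrite scalerBr opprD addrACA.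
- move=> a A B C HA HB HC; apply: Fam_ext => r s.
  have H : forall i, svF (famadd (famscale a B) C) i = fun t => a *: svF B i t + svF C i t.
    move=> i; apply: functional_extensionality => t.
    by rewrite /svF /famadd /famscale tosem_fadd tosem_fscale.
  rewrite v_br (fc_linl _ _ _ H) (@fc_linr K U B C A _ a r s (inU_good HA) H).
  rewrite /famadd /famscale tosem_fadd tosem_fscale !v_br.
  by rewrite scalerBr opprD addrACA.
- move=> A HA; apply: Fam_ext => r s.
  by rewrite v_br subrr /famzero tosem_fzero.
move=> A B C HA HB HC; apply: Fam_ext => r s.
have gA := inU_good HA; have gB := inU_good HB; have gC := inU_good HC.
rewrite /famadd !tosem_fadd /famscale !tosem_fscale !scaleN1r.
rewrite (v_fc_brr _ _ _ _ gA) (v_fc_brr _ _ _ _ gB) (v_fc_brr _ _ _ _ gC).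
rewrite !v_fc_brl.
rewrite (swap4 (fam_preLie r s gA gB gC)) (swap4 (fam_preLie r s gB gC gA)) (swap4 (fam_preLie r s gC gA gB)).
by rewrite /famzero tosem_fzero jac6.
Qed.
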